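(* Let $p\geq 5$ be a prime and $r$ a positive integer such that $3$ does not divide $p^r+1$. Then the function $A(x)=x^{p^r+2}$ on $\mathbb{F}_{p^{2r}}$ is not EA-equivalent to $x^3$.
   Context: An additive function on $\mathbb{F}_{q}$ is one satisfying $L(x+y)=L(x)+L(y)$ for all $x,y$; an affine function is an additive function plus a constant. Two functions $f_1,f_2:\mathbb{F}_{q}\to\mathbb{F}_{q}$ are extended affine (EA) equivalent if there exist affine functions $l_1,l_2,l_3$ with $l_1,l_2$ permutations of $\mathbb{F}_{q}$ such that $f_1(x)=l_1(f_2(l_2(x)))+l_3(x)$ for all $x$. *)

(* Defs.v *)
From mathcomp Require Import all_boot all_order all_algebra all_field.
Set Implicit Arguments. Unset Strict Implicit. Unset Printing Implicit Defensive.
Import GRing.Theory.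
Local Open Scope ring_scope.

Definition additive_fun (F : finFieldType) (L : F -> F) : Prop :=
  forall x y : F, L (x + y) = L x + L y.

Definition affine_fun (F : finFieldType) (l : F -> F) : Prop :=
  exists (L : F -> F) (c : F), additive_fun L /\ forall x, l x = L x + c.

Definition EA_equivalent (F : finFieldType) (f1 f2 : F -> F) : Prop :=
  exists l1 l2 l3 : F -> F,
    affine_fun l1 /\ affine_fun l2 /\ affine_fun l3 /\
    bijective l1 /\ bijective l2 /\
    (forall x, f1 x = l1 (f2 (l2 x)) + l3 x).

(* Main.v *)
Require Import Defs.
From mathcomp Require Import all_boot all_order all_algebra all_field.
From mathcomp Require Import ring zify.
Import GRing.Theory.
Local Open Scope ring_scope.

Set Implicit Arguments. Unset Strict Implicit.
Section Aux.
Variable F : finFieldType.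

Definition D3 (g : F -> F) (a b c : F) : F :=
  g (a+b+c) - g (a+b) - g (a+c) - g (b+c) + g a + g b + g c - g 0.

Lemma add_0 (L : F -> F) : additive_fun L -> L 0 = 0.
Proof. by move=> H; apply: (addrI (L 0)); rewrite addr0 -H addr0. Qed.

Lemma add_N (L : F -> F) : additive_fun L -> forall x, L (- x) = - L x.
Proof.
by move=> H x; apply: (addrI (L x)); rewrite -H !subrr (add_0 H).
Qed.

Lemma D3_ext g g' a b c : (forall x, g x = g' x) -> D3 g a b c = D3 g' a b c.
Proof. by move=> H; rewrite /D3 !H. Qed.

Lemma D3_lin (L : F -> F) h a b c : additive_fun L ->
  D3 (fun x => L (h x)) a b c = L (D3 h a b c).
Proof. by move=> H; rewrite /D3 !(H, add_N H). Qed.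

End Aux.

Theorem mainTheorem4 (p r : nat) (F : finFieldType) :
  prime p -> (5 <= p)%N -> (0 < r)%N -> ~~ (3 %| p ^ r + 1)%N ->
  #|F| = (p ^ (2 * r))%N ->
  ~ EA_equivalent (fun x : F => x ^+ (p ^ r + 2)) (fun x : F => x ^+ 3).
Proof.
move=> pp p5 r0 _ cardF.
have pc : p \in [pchar F] := card_finPcharP cardF pp.
set Q := (p ^ r)%N.
have frob : forall x y : F, (x + y) ^+ Q = x ^+ Q + y ^+ Q.
  move=> x y; apply: exprDn_pchar.
  by rewrite (eq_pnat _ (pcharf_eq pc)) pnatX pnat_id.
have Q0 : (0 < Q)%N by rewrite expn_gt0 prime_gt0.
have two0 : (2%:R : F) != 0.
  rewrite -(dvdn_pcharf pc); apply/negP => /(dvdn_leq (isT : (0 < 2)%N)) => h2; by have := leq_trans p5 h2.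
case=> l1 [l2 [l3 [[L1 [k1 [A1 E1]]] [[L2 [k2 [A2 E2]]] [[L3 [k3 [A3 E3]]] [bl1 [bl2 Heq]]]]]]].
have key : forall a b c : F,
   2%:R * (a ^+ Q * b * c + b ^+ Q * a * c + c ^+ Q * a * b)
   = L1 (6%:R * L2 a * L2 b * L2 c).
  move=> a b c.
  have e1 : D3 (fun x : F => x ^+ (Q + 2)) a b c =
     2%:R * (a ^+ Q * b * c + b ^+ Q * a * c + c ^+ Q * a * b).
    rewrite /D3 !exprD !frob expr0n /= (negPf (lt0n_neq0 Q0)).
    set aQ := a ^+ Q; set bQ := b ^+ Q; set cQ := c ^+ Q.
    ring.
  rewrite -e1 (D3_ext _ _ _ Heq).
  have -> : D3 (fun x => l1 (l2 x ^+ 3) + l3 x) a b c =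
            D3 (fun x => L1 ((L2 x + k2) ^+ 3)) a b c.
    rewrite /D3 !E1 !E2 !E3 !A3 (add_0 A3); ring.
  rewrite D3_lin //; congr (L1 _).
  rewrite /D3 !A2 (add_0 A2); ring.
have Q5 : (5 <= Q)%N.
  apply: leq_trans p5 _; by rewrite /Q -{1}(expn1 p) (leq_pexp2l (prime_gt0 pp)).
have [c0 c0Q] : exists c : F, c ^+ Q != c.
  suff /forallPn [c hc] : ~~ [forall c : F, c ^+ Q == c] by exists c.
  apply/negP => /forallP H.
  have P0 : ('X^Q - 'X : {poly F}) = 0.
    apply: (@roots_geq_poly_eq0 _ _ (enum F)); last first.
    - rewrite -cardE cardF mul2n -addnn expnD.
      apply: (leq_trans (size_polyD _ _)); rewrite size_polyN size_polyXn size_polyX.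
      have hn : forall n, (5 <= n)%N -> (n < n*n)%N /\ (2 <= n*n)%N by move=> n hn; split; nia.
      have [hn1 hn2] := hn _ Q5.
      by rewrite -/Q geq_max hn1 hn2.
    - exact: enum_uniq.
    - apply/allP => x _; rewrite rootE !hornerE subr_eq0.
      exact: H.
  have := congr1 (fun P : {poly F} => P`_Q) P0.
  rewrite coefB coefXn coefX eqxx coef0 (_ : (Q == 1)%N = false) ?subr0.
    by move/eqP; rewrite oner_eq0.
  by apply/eqP => Q1; move: Q5; rewrite Q1.
have [g g1 g2] := bl2.
have L2inj : injective L2.
  move=> x y hxy; rewrite -(g1 x) -(g1 y) !E2 hxy //.
have L2g : forall y, L2 (g (y + k2)) = y.
  by move=> y; apply: (addIr k2); rewrite -E2 g2.
have L21 : L2 1 != 0.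
  apply/eqP => h; have : L2 1 = L2 0 by rewrite h (add_0 A2).
  by move/L2inj/eqP; rewrite oner_eq0.
set a := c0 in c0Q *.
pose b := g (L2 a ^+ 2 / L2 1 + k2).
have Lb : L2 1 * L2 b = L2 a * L2 a.
  by rewrite /b L2g mulrC -mulrA mulVf // mulr1 expr2.
have E : forall c, b * c + b ^+ Q * c + c ^+ Q * b
                 = a ^+ Q * a * c + a ^+ Q * a * c + c ^+ Q * a * a.
  move=> c; apply: (mulfI two0).
  have := key 1 b c; have := key a a c.
  rewrite -(mulrA _ (L2 1)) Lb mulrA => <-.
  by rewrite expr1n !mul1r !mulr1.
have h1 := E 1; have h2 := E a.
rewrite expr1n !mulr1 !mul1r in h1.
set aQ := a ^+ Q in h1 h2 c0Q; set bQ := b ^+ Q in h1 h2.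
have hb : (b - a * a) * (aQ - a) = 0.
  have -> : (b - a * a) * (aQ - a) =
     ((b * a + bQ * a + aQ * b) - (aQ * a * a + aQ * a * a + aQ * a * a))
     - a * ((b + bQ + b) - (aQ * a + aQ * a + a * a)) by ring.
  by rewrite h1 h2 !subrr mulr0 subr0.
move/eqP: hb; rewrite mulf_eq0 !subr_eq0 (negPf c0Q) orbF => /eqP hb.
have hbQ : bQ = aQ * aQ by rewrite /bQ hb exprMn.
have : (aQ - a) ^+ 2 = 0.
  have -> : (aQ - a) ^+ 2 = (b + bQ + b) - (aQ * a + aQ * a + a * a)
    by rewrite hbQ hb; ring.
  by rewrite h1 subrr.
by move/eqP; rewrite expf_eq0 /= subr_eq0 (negPf c0Q).
Qed.
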